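(* It is undecidable whether, for an arbitrary ranked alphabet $\Sigma$, computable strong bimonoid $B$, and bottom-up deterministic $(\Sigma,B)$-wta $\mathcal{A}$, the wta $\mathcal{A}$ has the finite order property.
   Context: Ranked alphabet $\Sigma$ ($\Sigma^{(0)}\ne\emptyset$). Strong bimonoid $(B,\oplus,\otimes,\mathbb{0},\mathbb{1})$: commutative monoid $(B,\oplus,\mathbb{0})$, monoid $(B,\otimes,\mathbb{1})$, $\mathbb{0}\ne\mathbb{1}$, $\mathbb{0}$ absorbing; computable if $B$ is recursive and $\oplus,\otimes$ computable. For $b\in B$, $nb$ is the $n$-fold sum; $b$ has finite order in $(B,\oplus,\mathbb{0})$ if $\{nb\mid n\in\mathbb{N}\}$ is finite. $(\Sigma,B)$-wta $\mathcal{A}=(Q,\delta,F)$: $Q$ finite nonempty, $\delta_k:Q^k\times\Sigma^{(k)}\times Q\to B$, $F:Q\to B$; bottom-up deterministic if for all $k,\sigma,q_1,\dots,q_k$ at most one $q$ has $\delta_k(q_1\dots q_k,\sigma,q)\ne\mathbb{0}$. $H_{\mathcal{A}}$ is the smallest subset of $B$ containing $\bigcup_k\mathrm{im}(\delta_k)$ and closed under $\otimes$. $\mathcal{A}$ has the finite order property if $H_{\mathcal{A}}$ is finite and every element of $\{a\otimes c\mid a\in H_{\mathcal{A}},c\in\mathrm{im}(F)\}$ has finite order in $(B,\oplus,\mathbb{0})$. *)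

(* Defs.v *)
From mathcomp Require Import all_boot.

Set Implicit Arguments.
Unset Strict Implicit.
Unset Printing Implicit Defensive.

(*    Programs are generic trees (a countType, so they can themselves  *)
(*    be given as input, via the injective encoding [pickle]).         *)
(*    Any other tree diverges everywhere.                              *)

Definition program := GenTree.tree nat.

Inductive eval : program -> seq nat -> nat -> Prop :=
| ev_zero v : eval (GenTree.Node 0 [::]) v 0
| ev_succ v : eval (GenTree.Node 1 [::]) v (head 0 v).+1
| ev_proj i v : eval (GenTree.Node 2 [:: GenTree.Leaf i]) v (nth 0 v i)
| ev_comp f gs v ws y :
    evals gs v ws -> eval f ws y -> eval (GenTree.Node 3 (f :: gs)) v y
| ev_rec0 f g v y :
    eval f v y -> eval (GenTree.Node 4 [:: f; g]) (0 :: v) y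
| ev_recS f g n v z y :
    eval (GenTree.Node 4 [:: f; g]) (n :: v) z ->
    eval g [:: n, z & v] y ->
    eval (GenTree.Node 4 [:: f; g]) (n.+1 :: v) y
| ev_mu f v n :
    eval f (n :: v) 0 ->
    (forall m, m < n -> exists k, eval f (m :: v) k.+1) ->
    eval (GenTree.Node 5 [:: f]) v n
with evals : seq program -> seq nat -> seq nat -> Prop :=
| evs_nil v : evals [::] v [::]
| evs_cons g gs v w ws :
    eval g v w -> evals gs v ws -> evals (g :: gs) v (w :: ws).

(*   An instance consists of                                           *)
(*   - ranks : seq nat  -- the ranked alphabet {0,...,size ranks - 1}, *)
(*                         symbol s having rank (nth 0 ranks s);       *)
(*   - (cB, cplus, ctimes) -- programs: characteristic function of the *)
(*                         carrier B (a subset of nat), and the binary *)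
(*                         operations (+) and (x);                     *)
(*   - trans            -- the transition weights, a list of entries   *)
(*                         (sigma, [q1..qk], q, weight); delta at      *)
(*                         (q1..qk, sigma, q) is the weight of the     *)
(*                         first matching entry, and `zero' if none;   *)

Definition instance : Type :=
  (seq nat * nat * (program * program * program) * (nat * nat)
   * seq (nat * seq nat * nat * nat) * seq nat)%type.

Section Instance.
Variable I : instance.

Definition i_ranks : seq nat := I.1.1.1.1.1.
Definition i_nQ : nat := I.1.1.1.1.2.
Definition i_cB : program := I.1.1.1.2.1.1.
Definition i_cplus : program := I.1.1.1.2.1.2.
Definition i_ctimes : program := I.1.1.1.2.2.
Definition i_zero : nat := I.1.1.2.1.
Definition i_one : nat := I.1.1.2.2.
Definition i_trans : seq (nat * seq nat * nat * nat) := I.1.2.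
Definition i_fin : seq nat := I.2.

Definition is_sym (s : nat) : bool := s < size i_ranks.
Definition rank (s : nat) : nat := nth 0 i_ranks s.

Definition is_state (q : nat) : bool := q < i_nQ.

Definition inB (x : nat) : Prop := eval i_cB [:: x] 1.

Definition good_args (s : nat) (qs : seq nat) : bool :=
  [&& is_sym s, size qs == rank s & all is_state qs].

Definition delta (s : nat) (qs : seq nat) (q : nat) : nat :=
  let m := [seq e <- i_trans | (e.1.1.1 == s) && (e.1.1.2 == qs) && (e.1.2 == q)] in
  match m with
  | e :: _ => e.2
  | [::] => i_zero
  end.

Definition F (q : nat) : nat := nth i_zero i_fin q.

End Instance.

Definition decides_set (c : program) : Prop :=
  forall x, eval c [:: x] 0 \/ eval c [:: x] 1.

Definition computes2 (c : program) (P : nat -> Prop) (f : nat -> nat -> nat) :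
  Prop := forall x y, P x -> P y -> eval c [:: x; y] (f x y).

Definition strong_bimonoid (P : nat -> Prop) (add mul : nat -> nat -> nat)
  (z o : nat) : Prop :=
  [/\ P z, P o,
      (forall x y, P x -> P y -> P (add x y)) &
      (forall x y, P x -> P y -> P (mul x y))] /\
  [/\ (forall x y w, P x -> P y -> P w -> add (add x y) w = add x (add y w)),
      (forall x y, P x -> P y -> add x y = add y x) &
      (forall x, P x -> add z x = x /\ add x z = x)] /\
  [/\ (forall x y w, P x -> P y -> P w -> mul (mul x y) w = mul x (mul y w)),
      (forall x, P x -> mul o x = x /\ mul x o = x),
      z <> o &
      (forall x, P x -> mul z x = z /\ mul x z = z)].

Definition wf_wta (I : instance) : Prop :=
  0 < i_nQ I /\
  (forall e, e \in i_trans I ->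
     [/\ good_args I e.1.1.1 e.1.1.2, is_state I e.1.2 & inB I e.2]) /\
  size (i_fin I) = i_nQ I /\
  (forall q, is_state I q -> inB I (F I q)).

Definition bu_deterministic (I : instance) : Prop :=
  forall s qs, good_args I s qs ->
  forall q q', is_state I q -> is_state I q' ->
    delta I s qs q <> i_zero I -> delta I s qs q' <> i_zero I -> q = q'.

Definition valid_instance (I : instance) : Prop :=
  [/\ 0 \in i_ranks I,                       (* Sigma^(0) nonempty *)
      decides_set (i_cB I),
      (exists add mul,
         [/\ computes2 (i_cplus I) (inB I) add,
             computes2 (i_ctimes I) (inB I) mul &
             strong_bimonoid (inB I) add mul (i_zero I) (i_one I)]),
      wf_wta I &
      bu_deterministic I].

Definition finite_set (P : nat -> Prop) : Prop :=
  exists s : seq nat, forall x, P x -> x \in s.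

Definition in_im_delta (I : instance) (b : nat) : Prop :=
  exists s qs q, [/\ good_args I s qs, is_state I q & b = delta I s qs q].

Inductive inH (I : instance) (mul : nat -> nat -> nat) : nat -> Prop :=
| inH_base b : in_im_delta I b -> inH I mul b
| inH_mul a b : inH I mul a -> inH I mul b -> inH I mul (mul a b).

Fixpoint nsum (add : nat -> nat -> nat) (z : nat) (n : nat) (b : nat) : nat :=
  match n with
  | 0 => z
  | n'.+1 => add (nsum add z n' b) b
  end.

Definition finite_order (add : nat -> nat -> nat) (z b : nat) : Prop :=
  finite_set (fun x => exists n, x = nsum add z n b).

Definition fop_wrt (I : instance) (add mul : nat -> nat -> nat) : Prop :=
  finite_set (inH I mul) /\
  (forall a c, inH I mul a -> (exists q, is_state I q /\ c = F I q) ->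
     finite_order add (i_zero I) (mul a c)).

(* the operations of B are those computed by cplus / ctimes
   (they are uniquely determined on B, eval being deterministic) *)
Definition has_fop (I : instance) : Prop :=
  forall add mul,
    computes2 (i_cplus I) (inB I) add ->
    computes2 (i_ctimes I) (inB I) mul ->
    fop_wrt I add mul.

(* Main.v *)
Require Import Defs.
From mathcomp Require Import all_boot.
From Stdlib Require List Classical.
Set Implicit Arguments.
Unset Strict Implicit.
Unset Printing Implicit Defensive.

Notation Node := GenTree.Node.
Notation Leaf := GenTree.Leaf.

Definition tree_ind2 (P : program -> Prop) (HL : forall x, P (Leaf x))
  (HN : forall n l, (forall t, List.In t l -> P t) -> P (Node n l)) : forall t, P t :=
  fix F t := match t with
  | Leaf x => HL x
  | Node n l => HN n l ((fix G l : forall t, List.In t l -> P t :=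
        match l with
        | [::] => fun t H => False_ind _ H
        | t0 :: l' => fun t H => match H with
                                  | or_introl E => eq_ind t0 P (F t0) t E
                                  | or_intror H' => G l' t H' end
        end) l)
  end.

Fixpoint omapM (h : program -> option nat) (gs : seq program) : option (seq nat) :=
  match gs with
  | [::] => Some [::]
  | g :: gs' => match h g, omapM h gs' with
                | Some w, Some ws => Some (w :: ws)
                | _, _ => None end
  end.

Definition recF (F G : seq nat -> option nat) (v' : seq nat) :=
  fix r n := match n with
  | 0 => F v'
  | n'.+1 => match r n' with Some z => G [:: n', z & v'] | None => None end
  end.

Definition stF (F : seq nat -> option nat) (v : seq nat) :=
  fix st j := match j with
  | 0 => 0
  | j'.+1 => let s := st j' in
      if s != 0 then s else
      match F (j' :: v) with None => 1 | Some 0 => j'.+2 | Some _ => 0 end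
  end.

Fixpoint ceval (k : nat) (p : program) (v : seq nat) {struct p} : option nat :=
  match p with
  | Node 0 [::] => Some 0
  | Node 1 [::] => Some (head 0 v).+1
  | Node 2 [:: Leaf i] => Some (nth 0 v i)
  | Node 3 (f :: gs) =>
      match omapM (fun g => ceval k g v) gs with
      | Some ws => ceval k f ws
      | None => None end
  | Node 4 [:: f; g] =>
      match v with
      | [::] => None
      | n :: v' => recF (ceval k f) (ceval k g) v' n end
  | Node 5 [:: f] =>
      match stF (ceval k f) v k with s.+2 => Some s | _ => None end
  | _ => None
  end.

Section St.
Variables (F : seq nat -> option nat) (v : seq nat).

Lemma stF_S j : stF F v j.+1 =
  if stF F v j != 0 then stF F v j else
  match F (j :: v) with None => 1 | Some 0 => j.+2 | Some _ => 0 end.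
Proof. by []. Qed.

Lemma stF_0 j : stF F v j = 0 -> forall m, m < j -> exists w, F (m :: v) = Some w.+1.
Proof.
elim: j => [//|j IH]; rewrite stF_S.
have [E|NE] := eqVneq (stF F v j) 0; last by move=> /= Z; rewrite Z eqxx in NE.
rewrite /=; case Fj: (F (j :: v)) => [[|w]|] //= _ m.
rewrite ltnS leq_eqVlt => /orP [/eqP -> | ]; first by exists w.
exact: IH.
Qed.

Lemma stF_found j s : stF F v j = s.+2 ->
  [/\ s < j, F (s :: v) = Some 0 & forall m, m < s -> exists w, F (m :: v) = Some w.+1].
Proof.
elim: j => [//|j IH]; rewrite stF_S.
have [E|NE] := eqVneq (stF F v j) 0.
  rewrite /=; case Fj: (F (j :: v)) => [[|w]|] //= [<-]; split => //.
  exact: stF_0.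
move=> /= /IH [H1 H2 H3]; split => //; exact: ltnW.
Qed.

Lemma stF_fill s : F (s :: v) = Some 0 ->
  (forall m, m < s -> exists w, F (m :: v) = Some w.+1) ->
  forall j, s < j -> stF F v j = s.+2.
Proof.
move=> Fs Hm.
have H0 : forall j, j <= s -> stF F v j = 0.
  elim=> [//|j IH] Hj; rewrite stF_S IH ?(ltnW Hj) //=.
  by have [w ->] := Hm j Hj.
elim=> [//|j IH]; rewrite ltnS leq_eqVlt => /orP [/eqP <- | Hj].
  by rewrite stF_S H0 //= Fs.
by rewrite stF_S IH.
Qed.
End St.

Lemma stF_ext F G v j : (forall x, F x = G x) -> stF F v j = stF G v j.
Proof. move=> E; elim: j => [//|j IH]; by rewrite !stF_S IH E. Qed.

Lemma ceval_mono p : forall k k' v y, k <= k' -> ceval k p v = Some y -> ceval k' p v = Some y.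
Proof.
elim/tree_ind2: p => [x|n l IH] k k' v y Hk //.
case: n l IH => [|[|[|[|[|[|n]]]]]] [|f gs] IH //=.
- have Hf := IH f (or_introl erefl).
  have Hg : forall g, List.In g gs -> forall v y, ceval k g v = Some y -> ceval k' g v = Some y.
    by move=> g Hin v0 y0; apply: (IH g (or_intror Hin)).
  have Hws : forall ws, omapM (fun g => ceval k g v) gs = Some ws ->
      omapM (fun g => ceval k' g v) gs = Some ws.
    elim: gs Hg {IH} => [|g gs IHg] Hg ws //=.
    case E1: (ceval k g v) => [w|] //; case E2: (omapM _ gs) => [ws'|] // [<-].
    rewrite (Hg g (or_introl erefl) _ _ E1) (IHg _ ws' E2) //.
    by move=> g' H; apply: Hg; right.
  case E: (omapM _ gs) => [ws|] // H; rewrite (Hws _ E); exact: Hf Hk H.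
- case: gs IH => [|g [|? ?]] IH //.
  have Hf := IH f (or_introl erefl).
  have Hg := IH g (or_intror (or_introl erefl)).
  case: v => [//|n v'].
  elim: n y => [|n IHn] y /=; first exact: Hf.
  case E: (recF _ _ v' n) => [z|] // H.
  by rewrite (IHn _ E); apply: (Hg k).
- case: gs IH => [|? ?] IH //.
  have Hf := IH f (or_introl erefl).
  case E: (stF _ v k) => [|[|s]] // [<-].
  have [H1 H2 H3] := stF_found E.
  rewrite (@stF_fill _ _ s) //.
  + by apply: (Hf k).
  + by move=> m /H3 [w Hw]; exists w; apply: (Hf k).
  + exact: leq_trans H1 Hk.
Qed.

Lemma ceval_sound p : forall k v y, ceval k p v = Some y -> eval p v y.
Proof.
elim/tree_ind2: p => [x|n l IH] k v y //.
case: n l IH => [|[|[|[|[|[|n]]]]]] [|f gs] IH //=.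
- by move=> [<-]; constructor.
- by move=> [<-]; constructor.
- by case: f gs IH => [i|? ?] [|? ?] IH //= [<-]; constructor.
- have Hf := IH f (or_introl erefl).
  have Hg : forall g, List.In g gs -> forall v y, ceval k g v = Some y -> eval g v y.
    by move=> g Hin v0 y0; apply: (IH g (or_intror Hin)).
  have Hws : forall ws, omapM (fun g => ceval k g v) gs = Some ws -> evals gs v ws.
    elim: gs Hg {IH} => [|g gs IHg] Hg ws /=; first by move=> [<-]; constructor.
    case E1: (ceval k g v) => [w|] //; case E2: (omapM _ gs) => [ws'|] // [<-].
    constructor; first exact: (Hg g (or_introl erefl) _ _ E1).
    by apply: IHg => // g' H; apply: Hg; right.
  case E: (omapM _ gs) => [ws|] // H; apply: (ev_comp (ws:=ws)); [exact: Hws | exact: Hf H].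
- case: gs IH => [|g [|? ?]] IH //.
  have Hf := IH f (or_introl erefl).
  have Hg := IH g (or_intror (or_introl erefl)).
  case: v => [//|n v'].
  elim: n y => [|n IHn] y /=; first by move=> H; constructor; exact: Hf H.
  case E: (recF _ _ v' n) => [z|] // H.
  by apply: (ev_recS (z:=z)); [exact: IHn E | exact: Hg H].
- case: gs IH => [|? ?] IH //.
  have Hf := IH f (or_introl erefl).
  case E: (stF _ v k) => [|[|s]] // [<-].
  have [H1 H2 H3] := stF_found E.
  constructor; first exact: Hf H2.
  by move=> m /H3 [w Hw]; exists w; exact: Hf Hw.
Qed.

Lemma ceval_up k k' p v y : ceval k p v = Some y -> ceval (maxn k k') p v = Some y.
Proof. by apply: ceval_mono; rewrite leq_maxl. Qed.
Lemma ceval_up' k k' p v y : ceval k' p v = Some y -> ceval (maxn k k') p v = Some y.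
Proof. by apply: ceval_mono; rewrite leq_maxr. Qed.

Lemma ceval_complete p : forall v y, eval p v y -> exists k, ceval k p v = Some y.
Proof.
elim/tree_ind2: p => [x|n l IH] v y H; first by inversion H.
case: n l IH H => [|[|[|[|[|[|n]]]]]] [|f gs] IH H; try by inversion H.
- by inversion H; exists 0.
- by inversion H; exists 0.
- by inversion H; subst; exists 0.
- have Hf := IH f (or_introl erefl).
  have Hg : forall g, List.In g gs -> forall v y, eval g v y -> exists k, ceval k g v = Some y.
    by move=> g Hin v0 y0; apply: (IH g (or_intror Hin)).
  inversion H; subst.
  have [k1 E1] := Hf _ _ H5.
  have : exists k, omapM (fun g => ceval k g v) gs = Some ws.
    clear H5 E1.
    elim: gs ws Hg {IH H} H2 => [|g gs IHg] ws Hg Hev.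
      by inversion Hev; exists 0.
    inversion Hev; subst.
    have [ka Ea] := Hg g (or_introl erefl) _ _ H1.
    have [kb Eb] := IHg ws0 (fun g' Hi => Hg g' (or_intror Hi)) H4.
    exists (maxn ka kb) => /=; rewrite (ceval_up _ Ea).
    suff -> : omapM (fun g0 => ceval (maxn ka kb) g0 v) gs = Some ws0 by [].
    elim: gs ws0 {Hg IHg Hev H4} Eb => [|g0 gs IHg0] ws0 /=; first by [].
    case E1': (ceval kb g0 v) => [w'|] //; case E2': (omapM _ gs) => [ws'|] // [<-].
    by rewrite (ceval_up' _ E1') (IHg0 _ E2').
  move=> [k2 E2]; exists (maxn k1 k2) => /=.
  have -> : omapM (fun g0 => ceval (maxn k1 k2) g0 v) gs = Some ws.
    move: E2; clear -f; elim: gs ws => [|g0 gs IHg0] ws0 /=; first by [].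
    case E1': (ceval k2 g0 v) => [w|] //; case E2': (omapM _ gs) => [ws'|] // [<-].
    by rewrite (ceval_up' _ E1') (IHg0 _ E2').
  exact: ceval_up E1.
- case: gs IH H => [|g [|? ?]] IH H; try by inversion H.
  have Hf := IH f (or_introl erefl).
  have Hg := IH g (or_intror (or_introl erefl)).
  suff : forall n v' y, eval (Node 4 [:: f; g]) (n :: v') y ->
      exists k, ceval k (Node 4 [:: f; g]) (n :: v') = Some y.
    by inversion H; subst; apply.
  elim=> [|n IHn] v' y0 H0.
    inversion H0; subst; have [k Ek] := Hf _ _ H5; by exists k.
  inversion H0; subst.
  have [ka Ea] := IHn _ _ H6; have [kb Eb] := Hg _ _ H7.
  exists (maxn ka kb); move: (ceval_up kb Ea) => /= ->.
  exact: ceval_up' Eb.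
- case: gs IH H => [|? ?] IH H; try by inversion H.
  have Hf := IH f (or_introl erefl).
  inversion H; subst.
  have [k0 E0] := Hf _ _ H1.
  have : exists k, forall m, m < y -> exists w, ceval k f (m :: v) = Some w.+1.
    elim: y {H H1 E0} H2 => [|y IHy] Hm; first by exists 0.
    have [ka Ea] := IHy (fun m Hm' => Hm m (ltnW Hm')).
    have [w Hw] := Hm y (ltnSn y).
    have [kb Eb] := Hf _ _ Hw.
    exists (maxn ka kb) => m; rewrite ltnS leq_eqVlt => /orP [/eqP -> | Hmy].
      by exists w; exact: ceval_up' Eb.
    by have [w' Hw'] := Ea m Hmy; exists w'; exact: ceval_up Hw'.
  move=> [k1 E1].
  exists (maxn (maxn k0 k1) y.+1) => /=.
  rewrite (@stF_fill _ _ y) //.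
  + by apply: ceval_mono E0; rewrite !leq_max leqnn.
  + move=> m /E1 [w Hw]; exists w; apply: ceval_mono Hw.
    by rewrite !leq_max leqnn orbT.
  + by rewrite !leq_max leqnn orbT.
Qed.

Lemma eval_det p v y y' : eval p v y -> eval p v y' -> y = y'.
Proof.
move=> /ceval_complete [k E] /ceval_complete [k' E'].
have := ceval_up k' E; rewrite (ceval_up' k E') => -[] //.
Qed.

Definition ZERO : program := Node 0 [::].
Definition SUCC : program := Node 1 [::].
Definition PR (i : nat) : program := Node 2 [:: Leaf i].
Definition AP (f : program) (gs : seq program) : program := Node 3 (f :: gs).
Definition RC (f g : program) : program := Node 4 [:: f; g].
Definition MU (f : program) : program := Node 5 [:: f].

Lemma eval_eq p v y y' : eval p v y -> y = y' -> eval p v y'.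
Proof. by move=> H <-. Qed.

Lemma zero_ok v : eval ZERO v 0. Proof. exact: ev_zero. Qed.
Lemma succ_ok a v : eval SUCC (a :: v) a.+1. Proof. exact: (ev_succ (a :: v)). Qed.
Lemma pr_ok i v y : nth 0 v i = y -> eval (PR i) v y.
Proof. by move=> <-; exact: ev_proj. Qed.

Lemma ap1 f g v a y : eval g v a -> eval f [:: a] y -> eval (AP f [:: g]) v y.
Proof. by move=> H1 H; apply: (ev_comp (ws := [:: a])) => //; do ! constructor. Qed.
Lemma ap2 f g1 g2 v a b y : eval g1 v a -> eval g2 v b -> eval f [:: a; b] y ->
  eval (AP f [:: g1; g2]) v y.
Proof. by move=> H1 H2 H; apply: (ev_comp (ws := [:: a; b])) => //; do ! constructor. Qed.
Lemma ap3 f g1 g2 g3 v a b c y : eval g1 v a -> eval g2 v b -> eval g3 v c ->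
  eval f [:: a; b; c] y -> eval (AP f [:: g1; g2; g3]) v y.
Proof. by move=> H1 H2 H3 H; apply: (ev_comp (ws := [:: a; b; c])) => //; do ! constructor. Qed.

Lemma rc_ok f g (F : seq nat -> nat) (G : seq nat -> nat) v n :
  (forall w, eval f w (F w)) -> (forall w, eval g w (G w)) ->
  eval (RC f g) (n :: v) (iteri n (fun i z => G [:: i, z & v]) (F v)).
Proof.
move=> Hf Hg; elim: n => [|n IH] /=; first exact: ev_rec0.
exact: (ev_recS IH).
Qed.

Definition CONST (n : nat) : program := iter n (fun q => AP SUCC [:: q]) ZERO.
Lemma const_ok n v : eval (CONST n) v n.
Proof. elim: n => [|n IH]; first exact: zero_ok. exact: ap1 IH (succ_ok _ _). Qed.

Definition ADD : program := RC (PR 0) (AP SUCC [:: PR 1]).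
Lemma add_ok a b : eval ADD [:: a; b] (a + b).
Proof.
apply: eval_eq; first apply: (rc_ok (F := fun w => nth 0 w 0) (G := fun w => (nth 0 w 1).+1)).
- by move=> w; apply: pr_ok.
- by move=> w; apply: ap1; [apply: pr_ok; reflexivity | apply: succ_ok].
- by elim: a => //= a ->.
Qed.

Definition MUL : program := RC ZERO (AP ADD [:: PR 1; PR 2]).
Lemma mul_ok a b : eval MUL [:: a; b] (a * b).
Proof.
apply: eval_eq; first apply: (rc_ok (F := fun w => 0) (G := fun w => nth 0 w 1 + nth 0 w 2)).
- by move=> w; apply: zero_ok.
- by move=> w; apply: ap2; [apply: pr_ok; reflexivity | apply: pr_ok; reflexivity | apply: add_ok].
- by elim: a => //= a ->; rewrite mulSn addnC.
Qed.

Definition PRED : program := RC ZERO (PR 0).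
Lemma pred_ok a : eval PRED [:: a] a.-1.
Proof.
apply: eval_eq; first apply: (rc_ok (F := fun w => 0) (G := fun w => nth 0 w 0)).
- by move=> w; apply: zero_ok.
- by move=> w; apply: pr_ok.
- by case: a.
Qed.

Definition SUBR : program := RC (PR 0) (AP PRED [:: PR 1]).
Definition SUB : program := AP SUBR [:: PR 1; PR 0].
Lemma sub_ok a b : eval SUB [:: a; b] (a - b).
Proof.
apply: ap2; [apply: pr_ok; reflexivity | apply: pr_ok; reflexivity |].
apply: eval_eq; first apply: (rc_ok (F := fun w => nth 0 w 0) (G := fun w => (nth 0 w 1).-1)).
- by move=> w; apply: pr_ok.
- by move=> w; apply: ap1; [apply: pr_ok; reflexivity | apply: pred_ok].
- by elim: b => [|b IH] /=; [rewrite subn0 | rewrite IH subnS].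
Qed.

Definition ISZ : program := RC (CONST 1) ZERO.
Lemma isz_ok a : eval ISZ [:: a] (a == 0).
Proof.
apply: eval_eq; first apply: (rc_ok (F := fun w => 1) (G := fun w => 0)).
- by move=> w; apply: const_ok.
- by move=> w; apply: zero_ok.
- by case: a.
Qed.

Definition SG : program := RC ZERO (CONST 1).
Lemma sg_ok a : eval SG [:: a] (a != 0).
Proof.
apply: eval_eq; first apply: (rc_ok (F := fun w => 0) (G := fun w => 1)).
- by move=> w; apply: zero_ok.
- by move=> w; apply: const_ok.
- by case: a.
Qed.

Definition EQ : program :=
  AP ISZ [:: AP ADD [:: AP SUB [:: PR 0; PR 1]; AP SUB [:: PR 1; PR 0]]].
Lemma eq_ok a b : eval EQ [:: a; b] (a == b).
Proof.
apply: (ap1 (a := (a - b) + (b - a))).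
  apply: ap2; last apply: add_ok.
  - by apply: ap2; [apply: pr_ok; reflexivity | apply: pr_ok; reflexivity | apply: sub_ok].
  - by apply: ap2; [apply: pr_ok; reflexivity | apply: pr_ok; reflexivity | apply: sub_ok].
apply: eval_eq; first apply: isz_ok.
by rewrite addn_eq0 !subn_eq0 -eqn_leq.
Qed.

Definition EXP2 : program := RC (CONST 1) (AP ADD [:: PR 1; PR 1]).
Lemma exp2_ok a : eval EXP2 [:: a] (2 ^ a).
Proof.
apply: eval_eq; first apply: (rc_ok (F := fun w => 1) (G := fun w => nth 0 w 1 + nth 0 w 1)).
- by move=> w; apply: const_ok.
- by move=> w; apply: ap2; [apply: pr_ok; reflexivity | apply: pr_ok; reflexivity | apply: add_ok].
- by elim: a => //= a ->; rewrite expnS mul2n addnn.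
Qed.

Fixpoint tri n := if n is n'.+1 then tri n' + n'.+1 else 0.
Definition TRI : program := RC ZERO (AP ADD [:: PR 1; AP SUCC [:: PR 0]]).
Lemma tri_ok a : eval TRI [:: a] (tri a).
Proof.
apply: eval_eq; first apply: (rc_ok (F := fun w => 0) (G := fun w => nth 0 w 1 + (nth 0 w 0).+1)).
- by move=> w; apply: zero_ok.
- move=> w; apply: ap2; [apply: pr_ok; reflexivity | | apply: add_ok].
  by apply: ap1; [apply: pr_ok; reflexivity | apply: succ_ok].
- by elim: a => //= a ->.
Qed.

Definition pair (m s : nat) := tri (m + s) + s.
Definition ut (c : nat) := find (fun t => c < tri t.+1) (iota 0 c.+1).
Definition psnd c := c - tri (ut c).
Definition pfst c := ut c - psnd c.

Lemma tri_mono m n : m <= n -> tri m <= tri n.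
Proof.
move/subnK <-; elim: (n - m) => [|k IH] //=.
exact: leq_trans IH (leq_addr _ _).
Qed.

Lemma tri_ge n : n <= tri n.
Proof. by case: n => //= n; rewrite leq_addl. Qed.

Lemma ut_spec c : c < tri (ut c).+1 /\ forall m, m < ut c -> tri m.+1 <= c.
Proof.
have Hhas : has (fun t => c < tri t.+1) (iota 0 c.+1).
  apply/hasP; exists c; first by rewrite mem_iota leq0n add0n ltnSn.
  by apply: ltn_addl.
have Hlt := Hhas; rewrite has_find size_iota in Hlt.
split.
  have := nth_find 0 Hhas; rewrite nth_iota //.
move=> m Hm; have := before_find 0 Hm; rewrite nth_iota ?add0n; last first.
  by apply: ltn_trans Hm Hlt.
by move/negbT; rewrite -leqNgt.
Qed.

Lemma ut_le c : tri (ut c) <= c.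
Proof.
have [_ H] := ut_spec c; case E: (ut c) => [//|t].
by apply: H; rewrite E.
Qed.

Lemma ut_uniq c t : tri t <= c -> c < tri t.+1 -> ut c = t.
Proof.
move=> H1 H2; have [H3 H4] := ut_spec c.
apply/eqP; rewrite eqn_leq; apply/andP; split.
  rewrite leqNgt; apply/negP => /H4; by rewrite leqNgt H2.
rewrite leqNgt; apply/negP => Hlt.
have := tri_mono Hlt; rewrite leqNgt => /negP; apply.
exact: leq_ltn_trans H1 H3.
Qed.

Lemma ut_pair m s : ut (pair m s) = m + s.
Proof.
apply: ut_uniq; rewrite /pair ?leq_addr //=.
by rewrite addnS ltnS leq_add2l leq_addl.
Qed.

Lemma psnd_pair m s : psnd (pair m s) = s.
Proof. by rewrite /psnd ut_pair /pair addKn. Qed.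
Lemma pfst_pair m s : pfst (pair m s) = m.
Proof. by rewrite /pfst psnd_pair ut_pair addnK. Qed.
Lemma psnd_le c : psnd c <= c.
Proof. exact: leq_subr. Qed.
Lemma pair_unpair c : pair (pfst c) (psnd c) = c.
Proof.
have [H1 _] := ut_spec c; have H2 := ut_le c.
have Hs : psnd c <= ut c.
  by rewrite /psnd leq_subLR -ltnS -addnS.
by rewrite /pair /pfst subnK // /psnd addnC subnK.
Qed.
Lemma pair_ge_s m s : s <= pair m s.
Proof. exact: leq_addl. Qed.

Lemma pair_inj m s m' s' : pair m s = pair m' s' -> m = m' /\ s = s'.
Proof. move=> E; split; [by rewrite -(pfst_pair m s) E pfst_pair | by rewrite -(psnd_pair m s) E psnd_pair]. Qed.

Definition UTP : program := MU (AP ISZ [:: AP SUB [:: AP TRI [:: AP SUCC [:: PR 0]]; PR 1]]).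
Lemma utp_ok c : eval UTP [:: c] (ut c).
Proof.
have [H1 H2] := ut_spec c.
have Hf : forall t, eval (AP ISZ [:: AP SUB [:: AP TRI [:: AP SUCC [:: PR 0]]; PR 1]]) [:: t; c]
     (tri t.+1 - c == 0).
  move=> t; apply: (ap1 (a := tri t.+1 - c)); last exact: isz_ok.
  apply: ap2; last exact: sub_ok.
  - apply: ap1; last exact: tri_ok.
    by apply: ap1; [apply: pr_ok; reflexivity | apply: succ_ok].
  - by apply: pr_ok.
constructor.
  by apply: eval_eq (Hf _) _; rewrite subn_eq0 leqNgt H1.
move=> m /H2 Hm; exists 0; apply: eval_eq (Hf _) _.
by rewrite subn_eq0 Hm.
Qed.

Definition PSND : program := AP SUB [:: PR 0; AP TRI [:: UTP]].
Definition PFST : program := AP SUB [:: UTP; PSND].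
Lemma psnd_ok c : eval PSND [:: c] (psnd c).
Proof.
apply: ap2; [by apply: pr_ok | | exact: sub_ok].
apply: ap1; [exact: utp_ok | exact: tri_ok].
Qed.
Lemma pfst_ok c : eval PFST [:: c] (pfst c).
Proof. apply: ap2; [exact: utp_ok | exact: psnd_ok | exact: sub_ok]. Qed.

Definition PAIR : program := AP ADD [:: AP TRI [:: ADD]; PR 1].
Lemma pair_ok m s : eval PAIR [:: m; s] (pair m s).
Proof.
apply: ap2; [| by apply: pr_ok | exact: add_ok].
apply: ap1; [exact: add_ok | exact: tri_ok].
Qed.

Fixpoint enc (v : seq nat) : nat := if v is a :: v' then (pair a (enc v')).+1 else 0.

Lemma enc_surj c : exists v, enc v = c.
Proof.
elim: c {-2}c (leqnn c) => [|n IH] c Hc.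
  by exists [::]; move: Hc; rewrite leqn0 => /eqP ->.
case: c Hc => [|c] Hc; first by exists [::].
have [v Hv] := IH (psnd c) (leq_trans (psnd_le c) Hc).
by exists (pfst c :: v) => /=; rewrite Hv pair_unpair.
Qed.

Definition HD : program := AP PFST [:: AP PRED [:: PR 0]].
Definition TL : program := AP PSND [:: AP PRED [:: PR 0]].
Definition CONS : program := AP SUCC [:: PAIR].

Lemma pred_pr0 c : eval (AP PRED [:: PR 0]) [:: c] c.-1.
Proof. apply: ap1; [by apply: pr_ok | exact: pred_ok]. Qed.

Lemma hd_ok v : eval HD [:: enc v] (head 0 v).
Proof.
apply: ap1; first exact: pred_pr0.
apply: eval_eq; first exact: pfst_ok.
case: v => [|a v] /=; last by rewrite pfst_pair.
by rewrite /pfst /psnd (@ut_uniq 0 0).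
Qed.

Lemma tl_ok v : eval TL [:: enc v] (enc (behead v)).
Proof.
apply: ap1; first exact: pred_pr0.
apply: eval_eq; first exact: psnd_ok.
case: v => [|a v] /=; last by rewrite psnd_pair.
by rewrite /psnd (@ut_uniq 0 0).
Qed.

Lemma cons_ok a v : eval CONS [:: a; enc v] (enc (a :: v)).
Proof. apply: ap1; [exact: pair_ok | exact: succ_ok]. Qed.

Definition TLS (i : nat) : program := iter i (fun q => AP TL [:: q]) (PR 0).
Definition NTH (i : nat) : program := AP HD [:: TLS i].

Lemma tls_ok i v : eval (TLS i) [:: enc v] (enc (drop i v)).
Proof.
elim: i => [|i IH] /=; first by apply: pr_ok; rewrite drop0.
apply: ap1; first exact: IH.
apply: eval_eq; first exact: tl_ok.
by elim: v i {IH} => [|a v IHv] [|i] //=; rewrite drop0.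
Qed.

Lemma nth_ok i v : eval (NTH i) [:: enc v] (nth 0 v i).
Proof.
apply: ap1; first exact: tls_ok.
apply: eval_eq; first exact: hd_ok.
by elim: v i => [|a v IHv] [|i] //=; rewrite drop0.
Qed.

Definition ALLPOS (G : seq program) : program :=
  foldr (fun g acc => AP MUL [:: AP SG [:: g]; acc]) (CONST 1) G.
Definition ENCWS (G : seq program) : program :=
  foldr (fun g acc => AP CONS [:: AP PRED [:: g]; acc]) ZERO G.
Definition STEPR (cg : program) : program :=
  AP MUL [:: AP SG [:: PR 1];
             AP cg [:: PR 2; AP CONS [:: PR 0; AP CONS [:: AP PRED [:: PR 1]; PR 3]]]].
Definition RR (cf : program) : program := AP cf [:: PR 2; AP CONS [:: PR 0; PR 3]].
Definition STEPM (cf : program) : program :=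
  AP ADD [:: PR 1; AP MUL [:: AP ISZ [:: PR 1];
     AP ADD [:: AP ISZ [:: RR cf];
                AP MUL [:: AP MUL [:: AP ISZ [:: AP PRED [:: RR cf]]; AP SG [:: RR cf]];
                           AP SUCC [:: AP SUCC [:: PR 0]]]]]].

Fixpoint clk (p : program) : program :=
  match p with
  | Node 0 [::] => CONST 1
  | Node 1 [::] => AP SUCC [:: AP SUCC [:: AP HD [:: PR 1]]]
  | Node 2 [:: Leaf i] => AP SUCC [:: AP (NTH i) [:: PR 1]]
  | Node 3 (f :: gs) =>
      AP MUL [:: ALLPOS (map clk gs); AP (clk f) [:: PR 0; ENCWS (map clk gs)]]
  | Node 4 [:: f; g] =>
      AP MUL [:: AP SG [:: PR 1];
                 AP (RC (clk f) (STEPR (clk g))) [:: AP HD [:: PR 1]; PR 0; AP TL [:: PR 1]]]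
  | Node 5 [:: f] => AP PRED [:: AP (RC ZERO (STEPM (clk f))) [:: PR 0; PR 0; PR 1]]
  | _ => ZERO
  end.

Ltac prs := apply: pr_ok; simpl; reflexivity.

Definition oenc (o : option nat) : nat := if o is Some y then y.+1 else 0.

Lemma pr1_enc k v : eval (AP HD [:: PR 1]) [:: k; enc v] (head 0 v).
Proof. apply: ap1; [prs | exact: hd_ok]. Qed.

Lemma clk_ok p : forall k v, eval (clk p) [:: k; enc v] (oenc (ceval k p v)).
Proof.
elim/tree_ind2: p => [x|n l IH] k v; first exact: zero_ok.
case: n l IH => [|[|[|[|[|[|n]]]]]] [|f gs] IH; try exact: zero_ok.
- exact: const_ok.
- by apply: ap1; [apply: ap1; [exact: pr1_enc | exact: succ_ok] | exact: succ_ok].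
- case: f gs {IH} => [i|? ?] [|? ?]; try exact: zero_ok.
  apply: ap1; last exact: succ_ok.
  apply: ap1; [prs | exact: nth_ok].
- rewrite /=.
  have Hf := IH f (or_introl erefl).
  have Hg : forall g, List.In g gs -> eval (clk g) [:: k; enc v] (oenc (ceval k g v)).
    by move=> g Hin; apply: (IH g (or_intror Hin)).
  have HA : eval (ALLPOS (map clk gs)) [:: k; enc v] (omapM (fun g => ceval k g v) gs != None).
    elim: gs Hg {IH} => [|g gs IHg] Hg /=; first by apply: eval_eq (const_ok 1 _) _.
    apply: ap2.
    + by apply: ap1; [exact: Hg g (or_introl erefl) | exact: sg_ok].
    + by apply: IHg => g' H; apply: Hg; right.
    + apply: eval_eq; first exact: mul_ok.
      by case: (ceval k g v) => [w|]; case: (omapM _ gs).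
  have HE : eval (ENCWS (map clk gs)) [:: k; enc v]
      (enc (map (fun g => (oenc (ceval k g v)).-1) gs)).
    elim: gs Hg {IH HA} => [|g gs IHg] Hg /=; first exact: zero_ok.
    apply: ap2.
    + by apply: ap1; [exact: Hg g (or_introl erefl) | exact: pred_ok].
    + by apply: IHg => g' H; apply: Hg; right.
    + exact: cons_ok.
  have HS : forall ws, omapM (fun g => ceval k g v) gs = Some ws ->
      ws = map (fun g => (oenc (ceval k g v)).-1) gs.
    clear; elim: gs => [|g gs IHg] ws /=; first by move=> [<-].
    case: (ceval k g v) => [w|] //; case E: (omapM _ gs) => [ws'|] // [<-].
    by rewrite (IHg ws' E).
  apply: ap2; [exact: HA | apply: ap2; [prs | exact: HE | exact: Hf] | ].
  apply: eval_eq; first exact: mul_ok.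
  case E: (omapM _ gs) => [ws|] /=; last by rewrite mul0n.
  by rewrite (HS _ E) mul1n.
- case: gs IH => [|g [|? ?]] IH; try exact: zero_ok.
  have Hf := IH f (or_introl erefl).
  have Hg := IH g (or_intror (or_introl erefl)).
  have HR : forall n v', eval (RC (clk f) (STEPR (clk g))) [:: n; k; enc v']
      (oenc (recF (ceval k f) (ceval k g) v' n)).
    elim=> [|n IHn] v' /=; first by apply: ev_rec0; exact: Hf.
    apply: ev_recS; first exact: IHn.
    apply: ap2.
    + by apply: ap1; [prs | exact: sg_ok].
    + apply: ap2; [prs | | ]; last eapply Hg.
      apply: ap2; [prs | | ]; last eapply cons_ok.
      apply: ap2; [ | prs | ]; last eapply cons_ok.
      by apply: ap1; [prs | exact: pred_ok].
    + apply: eval_eq; first exact: mul_ok.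
      by case: (recF _ _ v' n) => [z|] /=; rewrite ?mul1n ?mul0n.
  apply: ap2.
  + by apply: ap1; [prs | exact: sg_ok].
  + apply: ap3; [exact: pr1_enc | prs | by apply: ap1; [prs | exact: tl_ok] | exact: HR].
  + apply: eval_eq; first exact: mul_ok.
    by case: v => [|n v'] /=; rewrite ?mul1n ?mul0n.
- case: gs IH => [|? ?] IH; try exact: zero_ok.
  have Hf := IH f (or_introl erefl).
  have HS : forall j, eval (RC ZERO (STEPM (clk f))) [:: j; k; enc v] (stF (ceval k f) v j).
    elim=> [|j IHj]; first by apply: ev_rec0; exact: zero_ok.
    apply: ev_recS; first exact: IHj.
    have HRR : eval (RR (clk f)) [:: j, stF (ceval k f) v j, k & [:: enc v]]
        (oenc (ceval k f (j :: v))).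
      apply: ap2; [prs | | ]; last eapply Hf.
      apply: ap2; [prs | prs | exact: cons_ok].
    set s := stF (ceval k f) v j; set r := oenc (ceval k f (j :: v)).
    apply: (@eval_eq _ _ (s + (s == 0) * ((r == 0) + ((r.-1 == 0) * (r != 0)) * j.+2))).
      apply: ap2; [prs | | exact: add_ok].
      apply: ap2; [by apply: ap1; [prs | exact: isz_ok] | | exact: mul_ok].
      apply: ap2; [by apply: ap1; [exact: HRR | exact: isz_ok] | | exact: add_ok].
      apply: ap2; [ | | exact: mul_ok].
        apply: ap2; [ | by apply: ap1; [exact: HRR | exact: sg_ok] | exact: mul_ok].
        apply: ap1; [ | exact: isz_ok].
        by apply: ap1; [exact: HRR | exact: pred_ok].
      by apply: ap1; [apply: ap1; [prs | exact: succ_ok] | exact: succ_ok].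
    rewrite stF_S -/s /r.
    case: s => [|s] /=; last by rewrite mul0n addn0.
    by rewrite add0n mul1n; case: (ceval k f (j :: v)) => [[|w]|] /=; rewrite ?mul1n ?mul0n ?add0n ?addn0.
  apply: (@eval_eq _ _ (stF (ceval k f) v k).-1).
    apply: ap1; last exact: pred_ok.
    apply: ap3; [prs | prs | prs | exact: HS].
  by rewrite /=; case: (stF (ceval k f) v k) => [|[|s]].
Qed.


Lemma clk_tot p k c : exists r, eval (clk p) [:: k; c] r.
Proof. have [v <-] := enc_surj c; eexists; exact: clk_ok. Qed.


Definition E (m s : nat) : nat := (pair m s).+2.
Definition Phi (m : nat) : nat := CodeSeq.code [:: m; CodeSeq.code [:: E m 1]].

Definition EPROG : program := AP SUCC [:: AP SUCC [:: AP PAIR [:: PR 0; CONST 1]]].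
Definition X0PROG : program := AP MUL [:: AP EXP2 [:: EPROG]; CONST 1].
Definition XPROG : program := AP MUL [:: AP EXP2 [:: X0PROG]; CONST 1].
Definition PHI : program := AP MUL [:: AP EXP2 [:: PR 0]; AP SUCC [:: AP ADD [:: XPROG; XPROG]]].

Lemma phi_ok m : eval PHI [:: m] (Phi m).
Proof.
have HX0 : eval X0PROG [:: m] (2 ^ E m 1 * 1).
  apply: ap2; [ | exact: const_ok | exact: mul_ok].
  apply: ap1; [ | exact: exp2_ok].
  apply: ap1; [ | exact: succ_ok]; apply: ap1; [ | exact: succ_ok].
  apply: ap2; [prs | exact: const_ok | exact: pair_ok].
have HX : eval XPROG [:: m] (2 ^ (2 ^ E m 1 * 1) * 1).
  apply: ap2; [ | exact: const_ok | exact: mul_ok].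
  apply: ap1; [ exact: HX0 | exact: exp2_ok].
apply: eval_eq.
  apply: ap2; [ | | exact: mul_ok].
  - by apply: ap1; [prs | exact: exp2_ok].
  - apply: ap1; [ | exact: succ_ok].
    apply: ap2; [exact: HX | exact: HX | exact: add_ok].
by rewrite /Phi /CodeSeq.code /= addnn.
Qed.

Section D.
Variable d : program.

Definition hit (m j : nat) : bool := ceval j d [:: Phi m] == Some 0.

Definition HITP : program :=
  AP EQ [:: AP (clk d) [:: PR 0; AP CONS [:: AP PHI [:: PR 1]; ZERO]]; CONST 1].

Lemma hitp_ok j m : eval HITP [:: j; m] (hit m j).
Proof.
apply: ap2; [ | exact: const_ok | ].
  apply: ap2; [prs | | ]; last first.
    apply: eval_eq; first exact: (clk_ok d j [:: Phi m]).
    reflexivity.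
  apply: ap2; [ | exact: zero_ok | exact: (cons_ok _ [::])].
  by apply: ap1; [prs | exact: phi_ok].
apply: eval_eq; first exact: eq_ok.
by rewrite /hit; case: (ceval j d [:: Phi m]) => [[|w]|].
Qed.

Definition tr (m v : nat) : nat := find (fun j => (j == v) || hit m j) (iota 0 v.+1).

Definition TRF : program :=
  AP MUL [:: AP ISZ [:: AP EQ [:: PR 0; PR 1]]; AP ISZ [:: AP HITP [:: PR 0; PR 2]]].
Definition TRP : program := MU TRF.

Lemma trf_ok j v m : eval TRF [:: j; v; m] (~~ ((j == v) || hit m j)).
Proof.
apply: eval_eq.
  apply: ap2; [ | | exact: mul_ok].
  - apply: ap1; [ | exact: isz_ok]; apply: ap2; [prs | prs | exact: eq_ok].
  - apply: ap1; [ | exact: isz_ok]; apply: ap2; [prs | prs | exact: hitp_ok].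
by case: (j == v); case: (hit m j).
Qed.

Lemma tr_spec m v : [/\ tr m v <= v, (tr m v == v) || hit m (tr m v) &
   forall i, i < tr m v -> ~~ hit m i /\ i != v].
Proof.
have Hhas : has (fun j => (j == v) || hit m j) (iota 0 v.+1).
  by apply/hasP; exists v; [rewrite mem_iota leq0n add0n ltnSn | rewrite eqxx].
have Hlt := Hhas; rewrite has_find size_iota in Hlt.
split; first by rewrite -ltnS.
  by have := nth_find 0 Hhas; rewrite nth_iota // add0n.
move=> i Hi; have := before_find 0 Hi; rewrite nth_iota ?add0n; last first.
  exact: ltn_trans Hi Hlt.
by case: (i == v); case: (hit m i).
Qed.

Lemma tr_uniq m w x : x <= w -> (x == w) || hit m x -> (forall i, i < x -> ~~ hit m i) ->
  tr m w = x.
Proof.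
move=> Hxw Hx Hi; have [H1 H2 H3] := tr_spec m w.
apply/eqP; rewrite eqn_leq; apply/andP; split.
  rewrite leqNgt; apply/negP => /H3 [Hh Hv].
  by move: Hx; rewrite (negbTE Hh) (negbTE Hv).
rewrite leqNgt; apply/negP => Htx.
move: H2; rewrite (negbTE (Hi _ Htx)) orbF => /eqP Ew.
by move: (leq_trans Htx Hxw); rewrite Ew ltnn.
Qed.

Lemma trp_ok v m : eval TRP [:: v; m] (tr m v).
Proof.
have [H1 H2 H3] := tr_spec m v.
constructor.
  by apply: eval_eq; first exact: trf_ok; rewrite H2.
move=> i /H3 [Hh Hv]; exists 0; apply: eval_eq; first exact: trf_ok.
by rewrite (negbTE Hh) (negbTE Hv).
Qed.

End D.


Definition SEL : program :=
  AP ADD [:: AP MUL [:: PR 0; PR 1]; AP MUL [:: AP ISZ [:: PR 0]; PR 2]].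
Lemma sel_ok (b : bool) a c : eval SEL [:: nat_of_bool b; a; c] (if b then a else c).
Proof.
apply: eval_eq.
  apply: ap2; [ | | exact: add_ok].
  - apply: ap2; [prs | prs | exact: mul_ok].
  - apply: ap2; [ | prs | exact: mul_ok].
    apply: ap1; [prs | exact: isz_ok].
by case: b => /=; rewrite ?mul1n ?mul0n ?addn0.
Qed.

Lemma ap3_sel (b : bool) a c g1 g2 g3 v :
  eval g1 v b -> eval g2 v a -> eval g3 v c -> eval (AP SEL [:: g1; g2; g3]) v (if b then a else c).
Proof. by move=> H1 H2 H3; apply: ap3 H1 H2 H3 (sel_ok b a c). Qed.

Definition mulB (x y : nat) : nat :=
  if x == 0 then 0 else if y == 0 then 0 else if x == 1 then y else if y == 1 then x else 0.

Definition EQC (g : program) (n : nat) : program := AP EQ [:: g; CONST n].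
Lemma eqc_ok g n v a : eval g v a -> eval (EQC g n) v (a == n).
Proof. move=> H; apply: ap2 H (const_ok _ _) (eq_ok _ _). Qed.

Definition MULB : program :=
  AP SEL [:: EQC (PR 0) 0; ZERO;
  AP SEL [:: EQC (PR 1) 0; ZERO;
  AP SEL [:: EQC (PR 0) 1; PR 1;
  AP SEL [:: EQC (PR 1) 1; PR 0; ZERO]]]].

Lemma mulB_ok x y : eval MULB [:: x; y] (mulB x y).
Proof.
rewrite /mulB.
apply: ap3_sel; [apply: eqc_ok; prs | exact: zero_ok | ].
apply: ap3_sel; [apply: eqc_ok; prs | exact: zero_ok | ].
apply: ap3_sel; [apply: eqc_ok; prs | prs | ].
apply: ap3_sel; [apply: eqc_ok; prs | prs | exact: zero_ok].
Qed.

Section D.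
Variable d : program.

Definition addB (x y : nat) : nat :=
  if x == 0 then y else if y == 0 then x else if (x == 1) || (y == 1) then 1 else
  if pfst (x - 2) == pfst (y - 2) then
    E (pfst (x - 2)) (tr d (pfst (x - 2)) (psnd (x - 2) + psnd (y - 2)))
  else 1.

Definition X2 : program := AP SUB [:: PR 0; CONST 2].
Definition Y2 : program := AP SUB [:: PR 1; CONST 2].
Definition EVP : program :=
  AP SUCC [:: AP SUCC [:: AP PAIR [:: AP PFST [:: X2];
     AP (TRP d) [:: AP ADD [:: AP PSND [:: X2]; AP PSND [:: Y2]]; AP PFST [:: X2]]]]].
Definition OR1 : program := AP SG [:: AP ADD [:: EQC (PR 0) 1; EQC (PR 1) 1]].
Definition ADDB : program :=
  AP SEL [:: EQC (PR 0) 0; PR 1;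
  AP SEL [:: EQC (PR 1) 0; PR 0;
  AP SEL [:: OR1; CONST 1;
  AP SEL [:: AP EQ [:: AP PFST [:: X2]; AP PFST [:: Y2]]; EVP; CONST 1]]]].

Lemma addB_ok x y : eval ADDB [:: x; y] (addB x y).
Proof.
have HX : eval X2 [:: x; y] (x - 2) by apply: ap2; [prs | exact: const_ok | exact: sub_ok].
have HY : eval Y2 [:: x; y] (y - 2) by apply: ap2; [prs | exact: const_ok | exact: sub_ok].
have HFX : eval (AP PFST [:: X2]) [:: x; y] (pfst (x - 2)) by apply: ap1 HX (pfst_ok _).
have HFY : eval (AP PFST [:: Y2]) [:: x; y] (pfst (y - 2)) by apply: ap1 HY (pfst_ok _).
rewrite /addB.
apply: ap3_sel; [apply: eqc_ok; prs | prs | ].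
apply: ap3_sel; [apply: eqc_ok; prs | prs | ].
have HOR : eval OR1 [:: x; y] ((x == 1) || (y == 1)).
  apply: eval_eq.
    apply: ap1; [ | exact: sg_ok].
    apply: ap2; [apply: eqc_ok; prs | apply: eqc_ok; prs | exact: add_ok].
  by case: (x == 1); case: (y == 1).
apply: ap3_sel; [exact: HOR | exact: const_ok | ].
apply: ap3_sel; [apply: ap2; [exact: HFX | exact: HFY | exact: eq_ok] | | exact: const_ok].
apply: ap1; [ | exact: succ_ok]; apply: ap1; [ | exact: succ_ok].
apply: ap2; [exact: HFX | | exact: pair_ok].
apply: ap2; [ | exact: HFX | exact: trp_ok].
apply: ap2; [ | | exact: add_ok].
- exact: ap1 HX (psnd_ok _).
- exact: ap1 HY (psnd_ok _).
Qed.

End D.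

Variant elt_spec : nat -> Type :=
| EZ : elt_spec 0 | EO : elt_spec 1 | EE m s : elt_spec (E m s).

Lemma eltP x : elt_spec x.
Proof.
case: x => [|[|x]]; [exact: EZ | exact: EO |].
by rewrite -(pair_unpair x); exact: EE.
Qed.

Lemma E2 m s : E m s - 2 = pair m s.
Proof. by rewrite /E -addn2 addnK. Qed.

Section D.
Variable d : program.
Local Notation tr := (tr d).
Local Notation hit := (hit d).
Local Notation addB := (addB d).

Lemma tr_key m a b : tr m (tr m a + b) = tr m (a + b).
Proof.
have [H1 H2 H3] := tr_spec d m a.
have [Ea|Na] := eqVneq (tr m a) a; first by rewrite Ea.
have Hh : hit m (tr m a) by move: H2; rewrite (negbTE Na).
have Hi : forall i, i < tr m a -> ~~ hit m i by move=> i /H3 [].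
rewrite (@tr_uniq d m (tr m a + b) (tr m a)) ?leq_addr ?Hh ?orbT //.
rewrite (@tr_uniq d m (a + b) (tr m a)) ?Hh ?orbT //.
exact: leq_trans H1 (leq_addr _ _).
Qed.

Lemma tr_nohit m v : (forall j, ~~ hit m j) -> tr m v = v.
Proof. by move=> H; apply: tr_uniq => //; rewrite eqxx. Qed.

Lemma tr_le_hit m v j : hit m j -> tr m v <= j.
Proof.
move=> Hj; have [_ _ H3] := tr_spec d m v.
rewrite leqNgt; apply/negP => /H3 [] /negP; by [].
Qed.

Lemma addB0l y : addB 0 y = y. Proof. by []. Qed.
Lemma addB0r x : addB x 0 = x. Proof. by case: x. Qed.
Lemma addB1E m s : addB 1 (E m s) = 1. Proof. by []. Qed.
Lemma addBE1 m s : addB (E m s) 1 = 1. Proof. by rewrite /addB /=. Qed.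
Lemma addB11 : addB 1 1 = 1. Proof. by []. Qed.
Lemma addBEE m s m' s' :
  addB (E m s) (E m' s') = if m == m' then E m (tr m (s + s')) else 1.
Proof. by rewrite /addB /= !E2 !pfst_pair !psnd_pair. Qed.

Lemma addBA x y z : addB (addB x y) z = addB x (addB y z).
Proof.
case: (eltP x) => [||m1 s1]; case: (eltP y) => [||m2 s2]; case: (eltP z) => [||m3 s3];
  rewrite ?addB0l ?addB0r ?addB1E ?addBE1 ?addB11 ?addBEE //.
- by case: (m2 == m3); rewrite ?addB1E ?addB11.
- by case: (m1 == m2); rewrite ?addBE1 ?addB11.
case: (eqVneq m1 m2) => [E12|N12]; case: (eqVneq m2 m3) => [E23|N23]; subst;
  rewrite ?addBEE ?addB1E ?addBE1 ?eqxx ?(negbTE N12) ?(negbTE N23) //.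
by rewrite (tr_key m3 (s1+s2) s3) [s1 + tr _ _]addnC (tr_key m3 (s2+s3) s1) [s2 + s3 + s1]addnC addnA.
Qed.

Lemma addBC x y : addB x y = addB y x.
Proof.
case: (eltP x) => [||m1 s1]; case: (eltP y) => [||m2 s2];
  rewrite ?addB0l ?addB0r ?addB1E ?addBE1 ?addB11 ?addBEE //.
case: (eqVneq m1 m2) => [<-|N]; first by rewrite addnC.
by [].
Qed.

End D.

Lemma mulBA x y z : mulB (mulB x y) z = mulB x (mulB y z).
Proof. by case: x => [|[|x]]; case: y => [|[|y]]; case: z => [|[|z]]. Qed.
Lemma mulB1 x : mulB 1 x = x /\ mulB x 1 = x.
Proof. by case: x => [|[|x]]. Qed.
Lemma mulB0 x : mulB 0 x = 0 /\ mulB x 0 = 0.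
Proof. by case: x => [|[|x]]. Qed.

Lemma sb_ok d (P : nat -> Prop) : (forall x, P x) -> strong_bimonoid P (addB d) mulB 0 1.
Proof.
move=> HP; split; [split=> // | split; [split | split]] => //.
- by move=> x y w _ _ _; apply: addBA.
- by move=> x y _ _; apply: addBC.
- by move=> x _; split; [apply: addB0l | apply: addB0r].
- by move=> x y w _ _ _; apply: mulBA.
- by move=> x _; apply: mulB1.
- by move=> x _; apply: mulB0.
Qed.

Definition cBp : program := AP SUCC [:: ZERO].
Lemma cBp_ok x : eval cBp [:: x] 1.
Proof. exact: ap1 (zero_ok _) (succ_ok _ _). Qed.

Section D.
Variable d : program.

Definition rest : seq nat * nat * (program * program * program) * (nat * nat)
   * seq (nat * seq nat * nat * nat) :=
  ([:: 0], 1, (cBp, ADDB d, MULB), (0, 1), [:: (0, [::], 0, 1)]).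
Definition Mc : nat := pickle rest.
Definition Inst : instance := (rest, [:: E Mc 1]).

Lemma pickle_Inst : pickle Inst = Phi Mc.
Proof. reflexivity. Qed.

Lemma E_ne0 m s : (E m s == 0) = false. Proof. by []. Qed.
Lemma E_ge m s : s <= E m s.
Proof. exact: leq_trans (pair_ge_s m s) (leq_trans (leqnSn _) (leqnSn _)). Qed.
Lemma E_ne1 m s : (E m s == 1) = false. Proof. by []. Qed.
Local Opaque Mc E pair tri.
Arguments E : simpl never.
Arguments pair : simpl never.
Arguments tri : simpl never.

Lemma inB_Inst x : inB Inst x.
Proof. exact: cBp_ok. Qed.

Lemma valid_Inst : valid_instance Inst.
Proof.
split => //.
- by move=> x; right; exact: cBp_ok.
- exists (addB d), mulB; split.
  + by move=> x y _ _; exact: addB_ok.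
  + by move=> x y _ _; exact: mulB_ok.
  + by apply: sb_ok => x; exact: inB_Inst.
- split=> //; split.
    by move=> e; rewrite inE => /eqP ->; split => //; exact: inB_Inst.
  by split => // q _; exact: inB_Inst.
- by move=> s qs _ [|q] [|q'].
Qed.

Lemma im_delta_Inst b : in_im_delta Inst b -> b = 1.
Proof.
move=> [s [qs [q [Hg Hq ->]]]].
move: Hg Hq; rewrite /good_args /is_state /is_sym /rank /=.
case: s => [|s] //; case: qs => [|? ?] //; case: q => [|q] //.
Qed.

Lemma inH_Inst mul b : (forall x y, mul x y = mulB x y) -> inH Inst mul b -> b = 1.
Proof.
move=> Hm; elim=> [b0 /im_delta_Inst //| a b0 _ -> _ ->].
by rewrite Hm.
Qed.

Lemma mem_le_sumn (s : seq nat) x : x \in s -> x <= sumn s.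
Proof.
elim: s => [//|y s IH]; rewrite inE => /orP [/eqP -> | /IH H] /=; first exact: leq_addr.
exact: leq_trans H (leq_addl _ _).
Qed.

Lemma nsum_ext add add' z n b : (forall x y, add x y = add' x y) -> nsum add z n b = nsum add' z n b.
Proof. by move=> H; elim: n => //= n ->. Qed.

Lemma nsumS add z n b : nsum add z n.+1 b = add (nsum add z n b) b.
Proof. by []. Qed.

Lemma nsum_hit j0 : hit d Mc j0 -> forall n, exists t,
  nsum (addB d) 0 n.+1 (E Mc 1) = E Mc t /\ t <= maxn 1 j0.
Proof.
move=> Hj; elim=> [|n [t [Ht Hle]]].
  exists 1; split; last exact: leq_maxl.
  rewrite nsumS addB0l; reflexivity.
exists (tr d Mc (t + 1)); split.
  rewrite nsumS Ht addBEE eqxx; reflexivity.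
exact: leq_trans (@tr_le_hit d Mc (t + 1) j0 Hj) (leq_maxr _ _).
Qed.

Lemma nsum_nohit : (forall j, ~~ hit d Mc j) -> forall n,
  nsum (addB d) 0 n.+1 (E Mc 1) = E Mc n.+1.
Proof.
move=> Hn; elim=> [|n IH]; first by rewrite nsumS addB0l; reflexivity.
rewrite nsumS IH addBEE eqxx (@tr_nohit d Mc _ Hn) addn1; reflexivity.
Qed.

Lemma mulB1E m s : mulB 1 (E m s) = E m s.
Proof. by rewrite /mulB E_ne0. Qed.

Lemma fop_hit j0 : hit d Mc j0 -> has_fop Inst.
Proof.
move=> Hj add mul Ha Hm.
have Ea : forall x y, add x y = addB d x y.
  by move=> x y; apply: eval_det (Ha x y (inB_Inst x) (inB_Inst y)) (addB_ok d x y).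
have Em : forall x y, mul x y = mulB x y.
  by move=> x y; apply: eval_det (Hm x y (inB_Inst x) (inB_Inst y)) (mulB_ok x y).
split.
  by exists [:: 1] => x /(inH_Inst Em) ->; rewrite inE.
move=> a c /(inH_Inst Em) -> [q [Hq ->]].
move: Hq; rewrite /is_state /= ; case: q => [|q] // _.
rewrite Em /F /= mulB1E.
exists (0 :: [seq E Mc t | t <- iota 0 (maxn 1 j0).+1]) => x [n ->].
rewrite (nsum_ext _ _ _ Ea).
case: n => [|n]; first by rewrite inE.
have [t [-> Ht]] := nsum_hit Hj n.
rewrite inE; apply/orP; right; apply/mapP; exists t; last reflexivity.
by rewrite mem_iota add0n ltnS Ht.
Qed.

Lemma nofop_nohit : (forall j, ~~ hit d Mc j) -> ~ has_fop Inst.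
Proof.
move=> Hn H.
have [_ H2] := H (addB d) mulB (fun x y _ _ => addB_ok d x y) (fun x y _ _ => mulB_ok x y).
have Hin1 : inH Inst mulB 1.
  apply: inH_base; exists 0, [::], 0; split; [reflexivity | reflexivity | reflexivity].
have Hc : exists q, is_state Inst q /\ E Mc 1 = F Inst q.
  by exists 0; split; [reflexivity | reflexivity].
have [s Hs] := H2 1 (E Mc 1) Hin1 Hc.
rewrite mulB1E in Hs.
have Hm := Hs (E Mc (sumn s).+1) (ex_intro _ (sumn s).+1 (esym (nsum_nohit Hn (sumn s)))).
have := leq_trans (E_ge Mc (sumn s).+1) (mem_le_sumn Hm).
by rewrite ltnn.
Qed.

End D.

Theorem theorem8p9 :
  ~ exists d : program,
      forall I : instance, valid_instance I ->
        (has_fop I -> eval d [:: pickle I] 1) /\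
        (~ has_fop I -> eval d [:: pickle I] 0).
Proof.
move=> [d Hd].
have [H1 H0] := Hd (Inst d) (valid_Inst d).
rewrite pickle_Inst in H1 H0.
case: (Classical_Prop.classic (exists j, hit d (Mc d) j)) => [[j Hj] | Hno].
  have E0 : eval d [:: Phi (Mc d)] 0 := ceval_sound (eqP Hj).
  by have := eval_det E0 (H1 (fop_hit Hj)).
have Hn : forall j, ~~ hit d (Mc d) j.
  by move=> j; apply/negP => Hj; apply: Hno; exists j.
have [k Ek] := ceval_complete (H0 (nofop_nohit Hn)).
by apply: Hno; exists k; rewrite /hit Ek.
Qed.
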